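(* Let $H\in(1/2,1)$ and $c\in(0,2^{2H-2})$, and let $T^\circ$ be the $\mathbb{N}$-valued random variable with \[ P(T^\circ=1)=c\,L^\circ_H(\{1,2\})=c,\qquad P(T^\circ=k)=c\,D^\circ_H(\{1,k+1\},\{2,3,\dots,k\})\ \ (k\ge2). \] Then $E(T^\circ)=\infty$, and there is a slowly varying function $L_2$ (depending on the parameters) such that $P(T^\circ>t)=t^{1-2H}L_2(t)$.
   Context: For a finite set $A=\{i_0<\dots<i_k\}\subset\mathbb{N}\cup\{0\}$ with $|A|\ge1$ define $L^\circ_H(A)=\prod_{j=1}^{k}|i_j-i_{j-1}|^{2H-2}$ (equal to $1$ if $|A|=1$), and for disjoint finite $A\ne\emptyset$, $B$ define $D^\circ_H(A,B)=\sum_{B'\subseteq B}(-1)^{|B'|}c^{|B'|}L^\circ_H(A\cup B')$. Equivalently, $T^\circ$ has the law of $\min\{i\ge1:X^*_i=1\}$ for the GBP-II$^*$ process $(X^*_i)_{i\in\mathbb{N}}$, the $\{0,1\}$-valued process with $P(\bigcap_{i\in A}\{X^*_i=1\}\cap\bigcap_{i\in B}\{X^*_i=0\})=c^{|A|}D^\circ_H(A\cup\{0\},B)$ for disjoint finite $A,B\subset\mathbb{N}$; in that process successive gaps between 1's are i.i.d. copies of $T^\circ$. *)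

(* Defs.v *)
From Stdlib Require Import Reals Lra Lia List Arith.
From Coquelicot Require Import Coquelicot.
Import ListNotations.
Open Scope R_scope.

(* Finite subsets of N ∪ {0} are represented by lists of naturals; the
   set-union A ∪ B' is turned into the increasing enumeration i_0<...<i_k
   by insertion sort. *)
Fixpoint insert_nat (x : nat) (l : list nat) : list nat :=
  match l with
  | [] => [x]
  | y :: l' => if Nat.leb x y then x :: l else y :: insert_nat x l'
  end.

Fixpoint sort_nat (l : list nat) : list nat :=
  match l with
  | [] => []
  | x :: l' => insert_nat x (sort_nat l')
  end.

(* all sub-lists (= all subsets B' of B when B has no repetitions) *)
Fixpoint sublists (l : list nat) : list (list nat) :=
  match l with
  | [] => [[]]
  | x :: l' => let s := sublists l' in s ++ map (cons x) s
  end.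

Definition gapR (i j : nat) : R := INR (if Nat.leb i j then j - i else i - j).

Fixpoint Lprod (H : R) (x : nat) (l : list nat) : R :=
  match l with
  | [] => 1
  | y :: l' => Rpower (gapR x y) (2 * H - 2) * Lprod H y l'
  end.

(* L°_H(A) for A given by its increasing enumeration (1 if |A| <= 1) *)
Definition Lcirc_sorted (H : R) (l : list nat) : R :=
  match l with
  | [] => 1
  | x :: l' => Lprod H x l'
  end.

Definition Lcirc (H : R) (A : list nat) : R := Lcirc_sorted H (sort_nat A).

Definition Dcirc (H c : R) (A B : list nat) : R :=
  fold_right Rplus 0
    (map (fun B' => (-1) ^ length B' * c ^ length B' * Lcirc H (A ++ B'))
         (sublists B)).

Definition pT (H c : R) (k : nat) : R :=
  match k with
  | 0 => 0
  | 1 => c * Lcirc H [1%nat; 2%nat]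
  | S k' => c * Dcirc H c [1%nat; S k] (seq 2 k')   (* {2,...,k} *)
  end.

Definition ET_partial (H c : R) (n : nat) : R :=
  sum_n (fun k => INR k * pT H c k) n.

Definition tailT (H c : R) (t : R) : R :=
  Series (fun k => if Rlt_dec t (INR k) then pT H c k else 0).

Definition slowly_varying (L : R -> R) : Prop :=
  (exists x0, forall x, x0 < x -> 0 < L x) /\
  (forall lam, 0 < lam -> is_lim (fun x => L (lam * x) / L x) p_infty 1).

(* Main.v *)
Require Import Defs.
From Stdlib Require Import Reals Lra Lia List Arith.
From Coquelicot Require Import Coquelicot.
Import ListNotations.
Open Scope R_scope.

Fixpoint fs (f : nat -> R) (n : nat) : R :=
  match n with O => 0 | S n' => fs f n' + f n' end.

Lemma fs_ext f g n : (forall i, (i < n)%nat -> f i = g i) -> fs f n = fs g n.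
Proof.
  induction n; intros Hfg; simpl; auto.
  rewrite IHn by (intros; apply Hfg; lia). rewrite Hfg by lia. reflexivity.
Qed.

Lemma fs_shift f n : fs f (S n) = f 0%nat + fs (fun i => f (S i)) n.
Proof.
  induction n; simpl in *; [ring|]. rewrite IHn. ring.
Qed.

Definition wp (H : R) (g : nat) : R := Rpower (INR g) (2*H-2).

Definition Phi (H c : R) (a : nat) (l : list nat) (e : nat) : R :=
  fold_right Rplus 0 (map (fun B' => (-1)^length B' * c^length B' * Lprod H a (B' ++ [e])) (sublists l)).

Lemma fold_app l1 l2 : fold_right Rplus 0 (l1 ++ l2) = fold_right Rplus 0 l1 + fold_right Rplus 0 l2.
Proof. induction l1; simpl; [ring| rewrite IHl1; ring]. Qed.

Lemma fold_scal (A:Type) (F : A -> R) k l :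
  fold_right Rplus 0 (map (fun x => k * F x) l) = k * fold_right Rplus 0 (map F l).
Proof. induction l; simpl; [ring| rewrite IHl; ring]. Qed.

Lemma Phi_nil H c a e : Phi H c a [] e = Rpower (gapR a e) (2*H-2).
Proof. unfold Phi; simpl. ring. Qed.

Lemma Phi_cons H c a x l e :
  Phi H c a (x::l) e = Phi H c a l e - c * Rpower (gapR a x) (2*H-2) * Phi H c x l e.
Proof.
  unfold Phi; simpl sublists. rewrite map_app, fold_app, map_map.
  rewrite (map_ext (fun x0 : list nat => (-1) ^ length (x :: x0) * c ^ length (x :: x0) * Lprod H a ((x :: x0) ++ [e]))
     (fun x0 => - (c * Rpower (gapR a x) (2 * H - 2)) * ((-1) ^ length x0 * c ^ length x0 * Lprod H x (x0 ++ [e])))).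
  - rewrite fold_scal. ring.
  - intros B. simpl. ring.
Qed.

Lemma Phi_expand H c : forall m r a e,
  Phi H c a (seq r m) e = Rpower (gapR a e) (2*H-2)
   - fs (fun i => c * Rpower (gapR a (r+i)) (2*H-2) * Phi H c (r+i) (seq (S (r+i)) (m-1-i)) e) m.
Proof.
  induction m; intros r a e.
  - simpl. rewrite Phi_nil. ring.
  - change (seq r (S m)) with (r :: seq (S r) m). rewrite Phi_cons, IHm, fs_shift.
    replace (r + 0)%nat with r by lia. replace (S m - 1 - 0)%nat with m by lia.
    rewrite (fs_ext (fun i => c * Rpower (gapR a (r + S i)) (2 * H - 2) *
      Phi H c (r + S i) (seq (S (r + S i)) (S m - 1 - S i)) e)
     (fun i => c * Rpower (gapR a (S r + i)) (2 * H - 2) * Phi H c (S r + i) (seq (S (S r + i)) (m - 1 - i)) e)).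
    + ring.
    + intros i Hi. replace (r + S i)%nat with (S r + i)%nat by lia.
      replace (S m - 1 - S i)%nat with (m - 1 - i)%nat by lia. reflexivity.
Qed.

Definition phi H c a m := Phi H c a (seq (S a) m) (S a + m).

Lemma gapR_succ a k : gapR a (S a + k) = INR (S k).
Proof.
  unfold gapR. replace (Nat.leb a (S a + k)) with true.
  - f_equal. lia.
  - symmetry. apply Nat.leb_le. lia.
Qed.

Lemma phi_eq H c : forall m a,
  phi H c a m = wp H (S m) - fs (fun i => c * wp H (S i) * phi H c 0 (m-1-i)) m.
Proof.
  intro m. induction m as [m IH] using lt_wf_ind. intro a.
  unfold phi at 1. rewrite Phi_expand, gapR_succ. unfold wp. f_equal.
  apply fs_ext. intros i Hi. rewrite gapR_succ.
  assert (E: Phi H c (S a + i) (seq (S (S a + i)) (m - 1 - i)) (S a + m) = phi H c (S a + i) (m-1-i)).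
  { unfold phi. f_equal. lia. }
  rewrite E. rewrite (IH (m-1-i)%nat) by lia. rewrite (IH (m-1-i)%nat ltac:(lia) 0%nat). reflexivity.
Qed.

Definition hh H c m := phi H c 0 m.

Lemma hh_rec H c m : hh H c m = wp H (S m) - fs (fun i => c * wp H (S i) * hh H c (m-1-i)) m.
Proof. unfold hh. apply phi_eq. Qed.

Fixpoint Pinc (lo : nat) (l : list nat) (hi : nat) : Prop :=
  match l with [] => (lo < hi)%nat | y :: l' => (lo < y)%nat /\ Pinc y l' hi end.

Lemma Pinc_lt l : forall lo hi, Pinc lo l hi -> (lo < hi)%nat.
Proof. induction l; simpl; intros lo hi Hp; [lia|]. destruct Hp as [H1 H2]. apply IHl in H2. lia. Qed.

Lemma Pinc_mono l lo lo' hi : (lo' <= lo)%nat -> Pinc lo l hi -> Pinc lo' l hi.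
Proof. destruct l; simpl; intros; [lia| split; [lia|tauto]]. Qed.

Lemma Pinc_sub l : forall lo hi, Pinc lo l hi -> forall B, In B (sublists l) -> Pinc lo B hi.
Proof.
  induction l as [|y l IH]; simpl; intros lo hi Hp B HB.
  - destruct HB as [<-|[]]. simpl. exact Hp.
  - destruct Hp as [H1 H2]. apply in_app_or in HB. destruct HB as [HB|HB].
    + apply (Pinc_mono _ y); [lia|]. eapply IH; eauto.
    + apply in_map_iff in HB. destruct HB as [B' [<- HB']]. simpl. split; auto.
Qed.

Lemma Pinc_seq m : forall r lo hi, (lo < r)%nat -> (r + m <= hi)%nat -> Pinc lo (seq r m) hi.
Proof.
  induction m; simpl; intros; [lia|]. split; [lia|]. apply IHm; lia.
Qed.

Lemma sort_id l : forall lo hi, Pinc lo l hi -> sort_nat l = l.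
Proof.
  induction l as [|y l IH]; simpl; intros lo hi Hp; auto.
  destruct Hp as [H1 H2]. rewrite (IH _ _ H2).
  destruct l as [|z l']; simpl; auto.
  destruct H2 as [H3 _]. replace (Nat.leb y z) with true; auto. symmetry; apply Nat.leb_le; lia.
Qed.

Lemma ins_hi l : forall lo hi, Pinc lo l hi -> insert_nat hi l = l ++ [hi].
Proof.
  induction l as [|y l IH]; simpl; intros lo hi Hp; auto.
  destruct Hp as [H1 H2]. pose proof (Pinc_lt _ _ _ H2).
  replace (Nat.leb hi y) with false. 2:{ symmetry; apply Nat.leb_gt; lia. }
  rewrite (IH _ _ H2). reflexivity.
Qed.

Lemma ins_lo l lo hi : Pinc lo l hi -> insert_nat lo (l ++ [hi]) = lo :: l ++ [hi].
Proof.
  destruct l as [|y l]; simpl; intros Hp.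
  - replace (Nat.leb lo hi) with true; auto. symmetry; apply Nat.leb_le; lia.
  - destruct Hp as [H1 _]. replace (Nat.leb lo y) with true; auto. symmetry; apply Nat.leb_le; lia.
Qed.

Lemma pT_hh H c m : pT H c (S m) = c * hh H c m.
Proof.
  destruct m as [|k].
  - simpl. unfold hh, phi. rewrite Phi_nil. unfold Lcirc. simpl. unfold gapR; simpl. ring.
  - unfold pT. f_equal. unfold hh. rewrite (phi_eq H c (S k) 0), <- (phi_eq H c (S k) 1).
    unfold phi, Dcirc, Phi. f_equal. apply map_ext_in. intros B HB.
    assert (HP : Pinc 1 B (S (S (S k)))).
    { eapply Pinc_sub; [|exact HB]. apply Pinc_seq; lia. }
    f_equal. unfold Lcirc. simpl app.
    change (sort_nat (1%nat :: S (S (S k)) :: B)) with (insert_nat 1 (insert_nat (S (S (S k))) (sort_nat B))).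
    rewrite (sort_id _ _ _ HP), (ins_hi _ _ _ HP), (ins_lo _ _ _ HP). reflexivity.
Qed.

Lemma fs_scal f k n : fs (fun i => k * f i) n = k * fs f n.
Proof. induction n; simpl; [ring|rewrite IHn; ring]. Qed.
Lemma fs_plus f g n : fs (fun i => f i + g i) n = fs f n + fs g n.
Proof. induction n; simpl; [ring|rewrite IHn; ring]. Qed.
Lemma fs_minus f g n : fs (fun i => f i - g i) n = fs f n - fs g n.
Proof. induction n; simpl; [ring|rewrite IHn; ring]. Qed.
Lemma fs_nonneg f n : (forall i, (i < n)%nat -> 0 <= f i) -> 0 <= fs f n.
Proof. induction n; simpl; intros Hf; [lra|]. pose proof (Hf n ltac:(lia)). pose proof (IHn ltac:(intros; apply Hf; lia)). lra. Qed.
Lemma fs_le f g n : (forall i, (i < n)%nat -> f i <= g i) -> fs f n <= fs g n.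
Proof. intros Hfg. assert (0 <= fs (fun i => g i - f i) n) by (apply fs_nonneg; intros; pose proof (Hfg i H); lra).
  rewrite fs_minus in H. lra. Qed.

Lemma kaluza (u f : nat -> R) :
  u 0%nat = 1 -> (forall n, 0 < u n) ->
  (forall j, u (S j) / u j <= u (S (S j)) / u (S j)) ->
  (forall m, u (S m) = fs (fun i => u i * f (S m - i)%nat) (S m)) ->
  forall n, (1 <= n)%nat -> 0 <= f n.
Proof.
  intros u0 upos rmono ren.
  assert (rmono2 : forall i n, (i <= n)%nat -> u (S i) / u i <= u (S n) / u n).
  { intros i n Hin. induction Hin; [lra|]. eapply Rle_trans; [apply IHHin| apply rmono]. }
  intro n. induction n as [n IH] using lt_wf_ind. intros Hn.
  destruct n as [|n]; [lia|]. destruct n as [|n].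
  - pose proof (ren 0%nat) as R0. simpl in R0. rewrite u0 in R0. pose proof (upos 1%nat). lra.
  - pose proof (ren (S n)) as R1. pose proof (ren n) as R2.
    rewrite fs_shift, u0 in R1.
    set (r := u (S (S n)) / u (S n)).
    assert (E : f (S (S n)) = fs (fun i => (r * u i - u (S i)) * f (S n - i)%nat) (S n)).
    { rewrite (fs_ext (fun i => (r * u i - u (S i)) * f (S n - i)%nat)
         (fun i => r * (u i * f (S n - i)%nat) - u (S i) * f (S (S n) - S i)%nat)).
      2:{ intros i Hi. replace (S (S n) - S i)%nat with (S n - i)%nat by lia. ring. }
      rewrite fs_minus, fs_scal, <- R2. replace (S (S n) - 0)%nat with (S (S n)) in R1 by lia.
      unfold r. field_simplify; [|pose proof (upos (S n)); lra]. lra. }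
    rewrite E. apply fs_nonneg. intros i Hi. apply Rmult_le_pos.
    + assert (u (S i) / u i <= r) by (apply rmono2; lia).
      pose proof (upos i). apply Rmult_le_reg_r with (/ u i). apply Rinv_0_lt_compat; lra.
      rewrite Rmult_0_l. replace ((r * u i - u (S i)) * / u i) with (r - u (S i) / u i) by (field; lra). lra.
    + apply IH; lia.
Qed.

Definition uu H c n := match n with O => 1 | S _ => c * wp H n end.

Lemma renewal H c m : uu H c (S m) = fs (fun i => uu H c i * pT H c (S m - i)%nat) (S m).
Proof.
  rewrite fs_shift. simpl uu at 2. replace (S m - 0)%nat with (S m) by lia.
  rewrite pT_hh, hh_rec.
  rewrite (fs_ext (fun i => uu H c (S i) * pT H c (S m - S i)%nat)
     (fun i => c * (c * wp H (S i) * hh H c (m - 1 - i)))).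
  - rewrite fs_scal. simpl. ring.
  - intros i Hi. simpl uu. replace (S m - S i)%nat with (S (m-1-i)) by lia. rewrite pT_hh. ring.
Qed.

Lemma wp_pos H n : 0 < wp H n.
Proof. unfold wp, Rpower. apply exp_pos. Qed.

Lemma exp_mono x y : x <= y -> exp x <= exp y.
Proof. intros [Hl|<-]; [left; apply exp_increasing; auto| lra]. Qed.

Lemma exp_div a b : exp a / exp b = exp (a - b).
Proof. unfold Rminus. rewrite exp_plus, exp_Ropp. reflexivity. Qed.

Lemma Rpower_1_base y : Rpower 1 y = 1.
Proof. unfold Rpower. rewrite ln_1, Rmult_0_r, exp_0. reflexivity. Qed.

Lemma ratio_mono x p : 1 <= x -> p <= 0 ->
  Rpower (x+1) p / Rpower x p <= Rpower (x+2) p / Rpower (x+1) p.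
Proof.
  intros Hx Hp. unfold Rpower. rewrite !exp_div. apply exp_mono.
  assert (ln x + ln (x+2) <= 2 * ln (x+1)).
  { rewrite <- ln_mult by lra. replace (2 * ln (x+1)) with (ln (x+1) + ln (x+1)) by ring.
    rewrite <- ln_mult by lra. apply ln_le; nra. }
  nra.
Qed.

Lemma pT_nonneg H c : 1/2 < H < 1 -> 0 < c < Rpower 2 (2 * H - 2) -> forall n, 0 <= pT H c n.
Proof.
  intros hH hc n. destruct n as [|n]; [simpl; lra|].
  apply (kaluza (uu H c)); [reflexivity| | |apply renewal|lia].
  - intros [|k]; simpl; [lra|]. pose proof (wp_pos H (S k)). nra.
  - intros j. destruct j as [|j].
    + simpl uu. unfold wp. replace (INR 1) with 1 by (simpl; ring). rewrite Rpower_1_base.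
      replace (INR 2) with 2 by (simpl; ring).
      replace (c * Rpower 2 (2 * H - 2) / (c * 1)) with (Rpower 2 (2 * H - 2)) by (field; lra). lra.
    + simpl uu. pose proof (wp_pos H (S (S j))). pose proof (wp_pos H (S (S (S j)))). pose proof (wp_pos H (S j)).
      replace (c * wp H (S (S j)) / (c * wp H (S j))) with (wp H (S (S j)) / wp H (S j)) by (field; lra).
      replace (c * wp H (S (S (S j))) / (c * wp H (S (S j)))) with (wp H (S (S (S j))) / wp H (S (S j))) by (field; lra).
      unfold wp. rewrite !S_INR. replace (INR j + 1 + 1 + 1) with ((INR j + 1) + 2) by ring.
      apply ratio_mono; [pose proof (pos_INR j); lra| lra].
Qed.

Definition conv (x y : nat -> R) n := fs (fun k => x k * y (n-k)%nat) (S n).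
Definition psum (x : nat -> R) n := fs x (S n).

Lemma fs_rev f n : fs f n = fs (fun k => f (n-1-k)%nat) n.
Proof.
  induction n; [reflexivity|].
  rewrite (fs_shift (fun k => f (S n - 1 - k)%nat) n). change (fs f (S n)) with (fs f n + f n). rewrite IHn.
  replace (S n - 1 - 0)%nat with n by lia.
  rewrite (fs_ext (fun k => f (n-1-k)%nat) (fun k => f (S n - 1 - S k)%nat)) by (intros; f_equal; lia). ring.
Qed.

Lemma conv_comm x y n : conv x y n = conv y x n.
Proof.
  unfold conv. rewrite fs_rev. apply fs_ext. intros k Hk.
  replace (S n - 1 - k)%nat with (n - k)%nat by lia. replace (n - (n-k))%nat with k by lia. ring.
Qed.

Lemma conv_psum_r y x n : conv y (psum x) n = psum (conv y x) n.
Proof.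
  induction n.
  - unfold conv, psum. simpl. ring.
  - change (psum (conv y x) (S n)) with (psum (conv y x) n + conv y x (S n)). rewrite <- IHn.
    unfold conv. change (fs (fun k => y k * psum x (S n - k)%nat) (S (S n))) with
      (fs (fun k => y k * psum x (S n - k)%nat) (S n) + y (S n) * psum x (S n - S n)%nat).
    change (fs (fun k => y k * x (S n - k)%nat) (S (S n))) with
      (fs (fun k => y k * x (S n - k)%nat) (S n) + y (S n) * x (S n - S n)%nat).
    rewrite (fs_ext (fun k => y k * psum x (S n - k)%nat) (fun k => y k * psum x (n - k)%nat + y k * x (S n - k)%nat)).
    2:{ intros k Hk. replace (S n - k)%nat with (S (n-k)) by lia. unfold psum. simpl. ring. }
    rewrite fs_plus. replace (S n - S n)%nat with 0%nat by lia. unfold psum. simpl. ring.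
Qed.

Lemma tri_exchange (G : nat -> nat -> R) n :
  fs (fun m => fs (fun k => G m k) (S m)) (S n) = fs (fun k => fs (fun j => G (k+j)%nat k) (S (n-k))) (S n).
Proof.
  induction n.
  - simpl. ring.
  - change (fs (fun m => fs (fun k => G m k) (S m)) (S (S n))) with
      (fs (fun m => fs (fun k => G m k) (S m)) (S n) + fs (fun k => G (S n) k) (S (S n))).
    rewrite IHn.
    change (fs (fun k => fs (fun j => G (k+j)%nat k) (S (S n - k))) (S (S n))) with
      (fs (fun k => fs (fun j => G (k+j)%nat k) (S (S n - k))) (S n) + fs (fun j => G (S n + j)%nat (S n)) (S (S n - S n))).
    rewrite (fs_ext (fun k => fs (fun j => G (k+j)%nat k) (S (S n - k)))
       (fun k => fs (fun j => G (k+j)%nat k) (S (n - k)) + G (S n) k)).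
    2:{ intros k Hk. replace (S n - k)%nat with (S (n - k)) by lia.
        change (fs (fun j => G (k+j)%nat k) (S (S (n - k)))) with
          (fs (fun j => G (k+j)%nat k) (S (n - k)) + G (k + S (n-k))%nat k).
        f_equal. f_equal. lia. }
    rewrite fs_plus. replace (S n - S n)%nat with 0%nat by lia.
    change (fs (fun k => G (S n) k) (S (S n))) with (fs (fun k => G (S n) k) (S n) + G (S n) (S n)).
    change (fs (fun j => G (S n + j)%nat (S n)) 1) with (0 + G (S n + 0)%nat (S n)). replace (S n + 0)%nat with (S n) by lia. change (fs (G (S n)) (S n)) with (fs (fun k => G (S n) k) (S n)). ring.
Qed.

Lemma conv_assoc x y z n : conv (conv x y) z n = conv x (conv y z) n.
Proof.
  unfold conv at 1. 
  rewrite (fs_ext (fun k => conv x y k * z (n - k)%nat) (fun m => fs (fun k => x k * y (m-k)%nat * z (n-m)%nat) (S m))).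
  2:{ intros m Hm. unfold conv. rewrite Rmult_comm, <- fs_scal. apply fs_ext. intros; ring. }
  rewrite tri_exchange. unfold conv. apply fs_ext. intros k Hk.
  rewrite <- fs_scal. apply fs_ext. intros j Hj.
  replace (k + j - k)%nat with j by lia. replace (n - (k+j))%nat with (n - k - j)%nat by lia. ring.
Qed.

Lemma conv_ext_l x x' y n : (forall k, (k <= n)%nat -> x k = x' k) -> conv x y n = conv x' y n.
Proof. intros Hx. unfold conv. apply fs_ext. intros k Hk. rewrite Hx by lia. reflexivity. Qed.
Lemma conv_ext_r x y y' n : (forall k, (k <= n)%nat -> y k = y' k) -> conv x y n = conv x y' n.
Proof. intros Hy. unfold conv. apply fs_ext. intros k Hk. rewrite Hy by lia. reflexivity. Qed.

Lemma conv_one_r x n : conv x (fun _ => 1) n = psum x n.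
Proof. unfold conv, psum. apply fs_ext. intros; ring. Qed.

Definition qq H c n := 1 - psum (pT H c) n.

Lemma conv_uf H c m : conv (uu H c) (pT H c) m = uu H c m - (if Nat.eqb m 0 then 1 else 0).
Proof.
  destruct m as [|m].
  - unfold conv. simpl. ring.
  - unfold conv. change (fs (fun k => uu H c k * pT H c (S m - k)%nat) (S (S m))) with
      (fs (fun k => uu H c k * pT H c (S m - k)%nat) (S m) + uu H c (S m) * pT H c (S m - S m)%nat).
    rewrite <- renewal. replace (S m - S m)%nat with 0%nat by lia. simpl pT. simpl Nat.eqb. cbv iota. ring.
Qed.

Lemma psum_minus x y n : psum (fun k => x k - y k) n = psum x n - psum y n.
Proof. unfold psum. apply fs_minus. Qed.

Lemma fs_zero n : fs (fun _ => 0) n = 0.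
Proof. induction n; simpl; [ring| rewrite IHn; ring]. Qed.

Lemma identity_I H c n : conv (qq H c) (uu H c) n = 1.
Proof.
  rewrite conv_comm. unfold qq.
  unfold conv. rewrite (fs_ext _ (fun k => uu H c k * 1 - uu H c k * psum (pT H c) (n-k)%nat)) by (intros; ring).
  rewrite fs_minus. fold (conv (uu H c) (psum (pT H c)) n). rewrite conv_psum_r.
  unfold psum. rewrite (fs_ext (conv (uu H c) (pT H c)) (fun m => uu H c m - (if Nat.eqb m 0 then 1 else 0))) by (intros; apply conv_uf).
  rewrite fs_minus. rewrite (fs_shift (fun m => if Nat.eqb m 0 then 1 else 0)).
  rewrite (fs_ext (fun i => if Nat.eqb (S i) 0 then 1 else 0) (fun _ => 0)) by (intros; reflexivity).
  rewrite fs_zero. rewrite (fs_ext (fun k => uu H c k * 1) (uu H c)) by (intros; ring). simpl Nat.eqb. cbv iota. ring.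
Qed.

Lemma identity_II H c (b : nat -> R) n :
  conv (qq H c) (conv b (uu H c)) n = psum b n.
Proof.
  rewrite (conv_ext_r _ _ (conv (uu H c) b)) by (intros; apply conv_comm).
  rewrite <- conv_assoc. rewrite (conv_ext_l _ (fun _ => 1)) by (intros; apply identity_I).
  rewrite conv_comm. apply conv_one_r.
Qed.

Lemma bern y t : 0 <= y <= 1 -> -1 < t -> Rpower (1+t) y <= 1 + y*t.
Proof.
  intros Hy Ht.
  set (g := fun s => 1 + y*s - exp (y * ln (1+s))).
  assert (Dg : forall s, -1 < s -> is_derive g s (y - y * / (1+s) * exp (y * ln (1+s)))).
  { intros s Hs. unfold g. auto_derive; [lra| ring]. }
  assert (Hmin : -1 < Rmin 0 t) by (apply Rmin_glb_lt; lra).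
  destruct (MVT_gen g 0 t (fun s => y - y * / (1+s) * exp (y * ln (1+s)))) as [xi [Hxi Heq]].
  - intros x Hx. apply Dg. lra.
  - intros x Hx. apply derivable_continuous_pt. exists (y - y * / (1+x) * exp (y * ln (1+x))).
    apply is_derive_Reals. apply Dg. lra.
  - assert (g0 : g 0 = 0) by (unfold g; rewrite Rplus_0_r, ln_1, Rmult_0_r, exp_0; ring).
    assert (Hx1 : 0 < 1 + xi) by lra.
    assert (E : / (1 + xi) * exp (y * ln (1 + xi)) = exp ((y - 1) * ln (1+xi))).
    { replace ((y-1) * ln (1+xi)) with (y * ln (1+xi) + - ln (1+xi)) by ring.
      rewrite exp_plus, exp_Ropp, exp_ln by lra. ring. }
    assert (0 <= (y - y * / (1 + xi) * exp (y * ln (1 + xi))) * (t - 0)).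
    { rewrite Rmult_assoc, E.
      destruct (Rle_dec 0 t) as [Ht0|Ht0].
      - rewrite Rmin_left, Rmax_right in Hxi by lra.
        assert (ln (1+xi) >= 0). { destruct (Rle_lt_or_eq_dec 1 (1+xi) ltac:(lra)) as [Hl|He].
          left; rewrite <- ln_1; apply ln_increasing; lra. rewrite <- He, ln_1. lra. }
        assert (exp ((y - 1) * ln (1 + xi)) <= 1) by (apply Rle_trans with (exp 0); [apply exp_mono; nra| rewrite exp_0; lra]).
        apply Rmult_le_pos; nra.
      - rewrite Rmin_right, Rmax_left in Hxi by lra.
        assert (ln (1+xi) <= 0). { destruct (Rle_lt_or_eq_dec (1+xi) 1 ltac:(lra)) as [Hl|He].
          left; rewrite <- ln_1; apply ln_increasing; lra. rewrite He, ln_1. lra. }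
        assert (1 <= exp ((y - 1) * ln (1 + xi))) by (apply Rle_trans with (exp 0); [rewrite exp_0; lra| apply exp_mono; nra]).
        assert (y * (1 - exp ((y - 1) * ln (1 + xi))) <= 0) by nra. nra. }
    rewrite g0 in Heq. unfold g in Heq. unfold Rpower. lra.
Qed.

Fixpoint P (x : R) (n : nat) : R :=
  match n with O => 1 | S n' => P x n' * (INR n' + x) / (INR n' + 1) end.

Lemma INR_p1 n : 0 < INR n + 1.
Proof. pose proof (pos_INR n); lra. Qed.

Lemma P_S_mul x n : (INR n + 1) * P x (S n) = (INR n + x) * P x n.
Proof. simpl. field. pose proof (INR_p1 n); lra. Qed.

Lemma P_pos x n : 0 < x -> 0 < P x n.
Proof.
  intros Hx; induction n; simpl; [lra|]. pose proof (INR_p1 n). pose proof (pos_INR n).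
  apply Rmult_lt_0_compat; [apply Rmult_lt_0_compat; lra| apply Rinv_0_lt_compat; lra].
Qed.

Lemma P_decr x n : 0 < x < 1 -> P x (S n) <= P x n.
Proof.
  intros Hx. pose proof (P_pos x n ltac:(lra)). pose proof (INR_p1 n). simpl.
  unfold Rdiv. rewrite Rmult_assoc. rewrite <- (Rmult_1_r (P x n)) at 2. apply Rmult_le_compat_l; [lra|].
  apply Rmult_le_reg_r with (INR n + 1); [lra|]. rewrite Rmult_assoc, Rinv_l by lra. lra.
Qed.

Lemma P_le1 x n : 0 < x < 1 -> P x n <= 1.
Proof. intros Hx; induction n; simpl; [lra|]. pose proof (P_decr x n Hx). simpl in H. lra. Qed.

Lemma P_conv_step x y n :
  (INR n + 1) * conv (P x) (P y) (S n) = (INR n + x + y) * conv (P x) (P y) n.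
Proof.
  unfold conv. rewrite <- fs_scal.
  rewrite (fs_ext (fun k => (INR n + 1) * (P x k * P y (S n - k)%nat))
    (fun k => (INR k * P x k) * P y (S n - k)%nat + P x k * (INR (S n - k) * P y (S n - k)%nat))).
  2:{ intros k Hk. assert (INR k + INR (S n - k) = INR n + 1) as E.
      { rewrite <- plus_INR, <- S_INR. f_equal. lia. } rewrite <- E. ring. }
  rewrite fs_plus. rewrite fs_shift.
  rewrite (fs_ext (fun i => INR (S i) * P x (S i) * P y (S n - S i)%nat) (fun i => (INR i + x) * P x i * P y (n - i)%nat)).
  2:{ intros i Hi. rewrite S_INR, P_S_mul. replace (S n - S i)%nat with (n - i)%nat by lia. ring. }
  change (fs (fun k => P x k * (INR (S n - k) * P y (S n - k)%nat)) (S (S n))) with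
    (fs (fun k => P x k * (INR (S n - k) * P y (S n - k)%nat)) (S n) + P x (S n) * (INR (S n - S n) * P y (S n - S n)%nat)).
  rewrite (fs_ext (fun k => P x k * (INR (S n - k) * P y (S n - k)%nat)) (fun k => P x k * ((INR (n - k) + y) * P y (n - k)%nat))).
  2:{ intros k Hk. replace (S n - k)%nat with (S (n - k)) by lia. rewrite S_INR, P_S_mul. reflexivity. }
  rewrite <- fs_scal. replace (S n - S n)%nat with 0%nat by lia.
  rewrite <- (fs_ext (fun i => (INR i + x) * P x i * P y (n - i)%nat + P x i * ((INR (n - i) + y) * P y (n - i)%nat))
     (fun k => (INR n + x + y) * (P x k * P y (n - k)%nat))).
  - rewrite fs_plus. simpl INR. ring.
  - intros k Hk. assert (INR k + INR (n - k) = INR n) as E. { rewrite <- plus_INR. f_equal. lia. } rewrite <- E. ring.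
Qed.

Lemma P_conv x y n : x + y = 1 -> conv (P x) (P y) n = 1.
Proof.
  intros Hxy. induction n.
  - unfold conv. simpl. ring.
  - pose proof (P_conv_step x y n) as E. rewrite IHn in E. pose proof (INR_p1 n).
    apply Rmult_eq_reg_l with (INR n + 1); [|lra]. rewrite E. lra.
Qed.

Lemma P_psum x n : 0 < x -> psum (P x) n = P x n * (INR n + x) / x.
Proof.
  intros Hx. induction n.
  - unfold psum. simpl. field. lra.
  - unfold psum in *. change (fs (P x) (S (S n))) with (fs (P x) (S n) + P x (S n)). rewrite IHn.
    assert (P x n * (INR n + x) = (INR n + 1) * P x (S n)) as E by (rewrite P_S_mul; ring).
    unfold Rdiv. rewrite E. rewrite S_INR. field. lra.
Qed.

Lemma Rpower_split a b y : 0 < a -> 0 < b -> Rpower b y = Rpower a y * Rpower (b/a) y.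
Proof. intros. rewrite Rpower_mult_distr by (try apply Rdiv_lt_0_compat; lra). f_equal. field. lra. Qed.

Lemma Rpower_pos a y : 0 < Rpower a y.
Proof. unfold Rpower. apply exp_pos. Qed.

Lemma Rpower_base_le a b y : 0 < a -> a <= b -> 0 <= y -> Rpower a y <= Rpower b y.
Proof. intros. unfold Rpower. apply exp_mono. apply Rmult_le_compat_l; auto. apply ln_le; auto. Qed.

Lemma Rpower_neg a y : Rpower a (- y) = / Rpower a y.
Proof. apply Rpower_Ropp. Qed.

Lemma P_upper x n : 0 < x < 1 -> P x n <= Rpower (INR n + 1) (x - 1).
Proof.
  intros Hx. induction n.
  - simpl. replace (0+1) with 1 by ring. rewrite Rpower_1_base. lra.
  - pose proof (INR_p1 n) as Hn. pose proof (pos_INR n).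
    rewrite (Rpower_split (INR n + 1)) by (try rewrite S_INR; lra).
    replace ((INR (S n) + 1) / (INR n + 1)) with (1 + / (INR n + 1)) by (rewrite S_INR; field; lra).
    replace (x - 1) with (- (1 - x)) by ring. rewrite (Rpower_neg (1 + _)).
    pose proof (bern (1-x) (/ (INR n + 1)) ltac:(lra) ltac:(pose proof (Rinv_0_lt_compat _ Hn); lra)) as Hb.
    pose proof (Rpower_pos (1 + / (INR n + 1)) (1-x)) as Hp.
    assert (HI : (INR n + x) / (INR n + 1) <= / Rpower (1 + / (INR n + 1)) (1 - x)).
    { apply Rmult_le_reg_r with (Rpower (1 + / (INR n + 1)) (1 - x)); [lra|].
      rewrite Rinv_l by lra. apply Rle_trans with ((INR n + x) / (INR n + 1) * (1 + (1 - x) * / (INR n + 1))).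
      - apply Rmult_le_compat_l; [apply Rdiv_le_0_compat; lra| lra].
      - apply Rmult_le_reg_r with ((INR n + 1) * (INR n + 1)); [nra|].
        field_simplify; [|lra]. nra. }
    replace (x - 1) with (- (1 - x)) in IHn by ring.
    change (P x (S n)) with (P x n * (INR n + x) / (INR n + 1)). unfold Rdiv. rewrite Rmult_assoc.
    apply Rmult_le_compat; [pose proof (P_pos x n ltac:(lra)); lra| apply Rmult_le_pos; [lra| left; apply Rinv_0_lt_compat; lra]| exact IHn| exact HI].
Qed.

Definition sP x n := P x (S n) * Rpower (INR (S n)) (1 - x).

Lemma sP_mono x n : 0 < x < 1 -> sP x n <= sP x (S n).
Proof.
  intros Hx. unfold sP. set (m := INR (S n)).
  assert (Hm : 1 <= m) by (unfold m; rewrite S_INR; pose proof (pos_INR n); lra).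
  assert (E1 : INR (S (S n)) = m + 1) by (unfold m; rewrite (S_INR (S n)); ring).
  change (P x (S (S n))) with (P x (S n) * (INR (S n) + x) / (INR (S n) + 1)). fold m. rewrite E1.
  rewrite (Rpower_split m (m+1)) by lra.
  replace ((m + 1) / m) with (1 + / m) by (field; lra).
  assert (E2 : Rpower (1 + / m) (1 - x) = (1 + / m) / Rpower (1 + / m) x).
  { unfold Rminus. rewrite Rpower_plus, Rpower_1, Rpower_neg by (pose proof (Rinv_0_lt_compat _ (Rlt_le_trans 0 1 m ltac:(lra) Hm)); lra). reflexivity. }
  rewrite E2.
  pose proof (bern x (/ m) ltac:(lra) ltac:(pose proof (Rinv_0_lt_compat _ (Rlt_le_trans 0 1 m ltac:(lra) Hm)); lra)) as Hb.
  pose proof (Rpower_pos (1 + / m) x). pose proof (Rpower_pos m (1 - x)). pose proof (P_pos x (S n) ltac:(lra)).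
  assert (1 <= (m + x) / (m + 1) * ((1 + / m) / Rpower (1 + / m) x)).
  { apply Rle_trans with ((m + x) / (m + 1) * ((1 + / m) / (1 + x * / m))).
    - right. field. split; [lra|]. split; [|lra]. assert (0 < x * / m). { apply Rmult_lt_0_compat; [lra| apply Rinv_0_lt_compat; lra]. } lra.
    - apply Rmult_le_compat_l; [apply Rdiv_le_0_compat; lra|]. unfold Rdiv. apply Rmult_le_compat_l.
      + assert (0 < / m) by (apply Rinv_0_lt_compat; lra). lra.
      + apply Rinv_le_contravar; lra. }
  replace (P x (S n) * (m + x) / (m + 1) * (Rpower m (1 - x) * ((1 + / m) / Rpower (1 + / m) x)))
    with ((P x (S n) * Rpower m (1 - x)) * ((m + x) / (m + 1) * ((1 + / m) / Rpower (1 + / m) x))) by (field; lra).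
  rewrite <- (Rmult_1_r (P x (S n) * Rpower m (1 - x))) at 1. apply Rmult_le_compat_l; [nra| lra].
Qed.

Lemma sP_le1 x n : 0 < x < 1 -> sP x n <= 1.
Proof.
  intros Hx. unfold sP. pose proof (P_upper x (S n) Hx).
  replace (x - 1) with (- (1 - x)) in H by ring. rewrite Rpower_neg in H.
  assert (Rpower (INR (S n)) (1 - x) <= Rpower (INR (S n) + 1) (1 - x)).
  { apply Rpower_base_le; [rewrite S_INR; pose proof (pos_INR n); lra| lra| lra]. }
  pose proof (Rpower_pos (INR (S n)) (1 - x)). pose proof (Rpower_pos (INR (S n) + 1) (1 - x)).
  apply Rle_trans with (/ Rpower (INR (S n) + 1) (1 - x) * Rpower (INR (S n)) (1 - x)).
  - apply Rmult_le_compat_r; lra.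
  - apply Rmult_le_reg_l with (Rpower (INR (S n) + 1) (1 - x)); [lra|]. rewrite <- Rmult_assoc, Rinv_r by lra. lra.
Qed.

Lemma sP_0 x : 0 < x -> sP x 0 = x.
Proof. intros. unfold sP. simpl. replace (0+1) with 1 by ring. rewrite Rpower_1_base. field. Qed.

Lemma sP_lim x : 0 < x < 1 -> exists L, x <= L <= 1 /\ is_lim_seq (sP x) L /\ forall n, sP x n <= L.
Proof.
  intros Hx.
  assert (Hg : Un_growing (sP x)) by (intro n; apply sP_mono; auto).
  assert (Hb : has_ub (sP x)) by (exists 1; intros y [n ->]; apply sP_le1; auto).
  destruct (growing_cv _ Hg Hb) as [L HL].
  pose proof (growing_ineq _ _ Hg HL) as Hle.
  exists L. split; [split|split].
  - rewrite <- (sP_0 x) by lra. apply Hle.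
  - apply is_lim_seq_Reals in HL. apply (is_lim_seq_le (sP x) (fun _ => 1) L 1); auto.
    + intros; apply sP_le1; auto.
    + apply is_lim_seq_const.
  - apply is_lim_seq_Reals; auto.
  - exact Hle.
Qed.

Lemma fs_abs g n : Rabs (fs g n) <= fs (fun i => Rabs (g i)) n.
Proof.
  induction n; simpl. - rewrite Rabs_R0; lra.
  - eapply Rle_trans; [apply Rabs_triang| lra].
Qed.

Lemma count_ind M K n : fs (fun i => if Nat.ltb i M then K else 0) n = INR (Nat.min n M) * K.
Proof.
  induction n; [simpl; ring|]. cbn [fs]. rewrite IHn.
  destruct (Nat.ltb n M) eqn:E.
  - apply Nat.ltb_lt in E. replace (Nat.min (S n) M) with (S (Nat.min n M)) by lia. rewrite S_INR. ring.
  - apply Nat.ltb_ge in E. replace (Nat.min (S n) M) with M by lia. replace (Nat.min n M) with M by lia. ring.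
Qed.

Lemma count_ind_le M K n : 0 <= K -> fs (fun i => if Nat.ltb i M then K else 0) n <= INR M * K.
Proof.
  intros HK. rewrite count_ind. apply Rmult_le_compat_r; auto. apply le_INR. lia.
Qed.

Lemma lim_ev (u : nat -> R) (l : R) (eps : R) : is_lim_seq u l -> 0 < eps ->
  exists N, forall n, (N <= n)%nat -> Rabs (u n - l) < eps.
Proof.
  intros Hl He. apply is_lim_seq_spec in Hl. destruct (Hl (mkposreal eps He)) as [N HN]. exists N. exact HN.
Qed.

Lemma lim_ev_inf (u : nat -> R) (A : R) : is_lim_seq u p_infty ->
  exists N, forall n, (N <= n)%nat -> A < u n.
Proof.
  intros Hl. apply is_lim_seq_spec in Hl. destruct (Hl A) as [N HN]. exists N. exact HN.
Qed.

Lemma conv_to0 (b a e : nat -> R) E :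
  (forall i, 0 <= b i) -> is_lim_seq b 0 -> (forall i, 0 <= a i <= 1) ->
  (forall j, conv b a j = 1) -> (forall i, Rabs (e i) <= E) -> is_lim_seq e 0 ->
  is_lim_seq (conv b (fun i => a i * e i)) 0.
Proof.
  intros Hb Hbl Ha Hc HE Hel. apply is_lim_seq_spec. intros eps.
  assert (HE0 : 0 <= E) by (pose proof (HE 0%nat); pose proof (Rabs_pos (e 0%nat)); lra).
  destruct (lim_ev e 0 (eps/2) Hel ltac:(destruct eps; simpl; lra)) as [M HM].
  set (d := eps / (2 * (INR M + 1) * (E + 1))).
  assert (Hd : 0 < d). { unfold d. destruct eps as [ep Hep]; simpl. apply Rdiv_lt_0_compat; [lra|].
    pose proof (pos_INR M). apply Rmult_lt_0_compat; lra. }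
  destruct (lim_ev b 0 d Hbl Hd) as [N0 HN0].
  exists (N0 + M)%nat. intros j Hj. rewrite Rminus_0_r.
  unfold conv. eapply Rle_lt_trans; [apply fs_abs|].
  apply Rle_lt_trans with (fs (fun k => eps/2 * (b k * a (j - k)%nat) + (if Nat.ltb (j - k) M then d * E else 0)) (S j)).
  - apply fs_le. intros k Hk.
    rewrite !Rabs_mult, (Rabs_pos_eq (b k)), (Rabs_pos_eq (a (j-k)%nat)) by (try apply Hb; apply Ha).
    pose proof (Hb k). pose proof (Ha (j-k)%nat). pose proof (HE (j-k)%nat).
    destruct (Nat.ltb (j - k) M) eqn:EM.
    + apply Nat.ltb_lt in EM. assert (Hbk : b k < d).
      { specialize (HN0 k ltac:(lia)). rewrite Rminus_0_r, Rabs_pos_eq in HN0 by auto. auto. }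
      assert (b k * a (j - k)%nat * Rabs (e (j - k)%nat) <= d * E).
      { apply Rmult_le_compat; [nra| apply Rabs_pos| |auto]. nra. }
      pose proof (Rmult_le_pos (b k) (a (j-k)%nat) ltac:(lra) ltac:(lra)). destruct eps; simpl in *. nra.
    + apply Nat.ltb_ge in EM. specialize (HM (j-k)%nat EM). rewrite Rminus_0_r in HM.
      pose proof (Rmult_le_pos (b k) (a (j-k)%nat) ltac:(lra) ltac:(lra)).
      assert (b k * a (j - k)%nat * Rabs (e (j - k)%nat) <= b k * a (j - k)%nat * (eps/2)) by (apply Rmult_le_compat_l; lra).
      lra.
  - rewrite fs_plus, fs_scal. fold (conv b (fun k => a k) j).
    replace (conv b (fun k => a k) j) with 1 by (symmetry; apply Hc).
    rewrite fs_rev. 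
    rewrite (fs_ext (fun k => if Nat.ltb (j - (S j - 1 - k)) M then d * E else 0) (fun k => if Nat.ltb k M then d * E else 0)).
    2:{ intros k Hk. replace (j - (S j - 1 - k))%nat with k by lia. reflexivity. }
    pose proof (count_ind_le M (d*E) (S j) ltac:(nra)).
    assert (INR M * (d * E) < eps / 2).
    { unfold d. destruct eps as [ep Hep]; simpl in *. pose proof (pos_INR M).
      apply Rle_lt_trans with (ep / 2 * (INR M / (INR M + 1)) * (E / (E + 1))).
      - right. field. lra.
      - assert (INR M / (INR M + 1) < 1) by (apply Rmult_lt_reg_r with (INR M + 1); [lra|]; field_simplify; lra).
        assert (E / (E + 1) < 1) by (apply Rmult_lt_reg_r with (E + 1); [lra|]; field_simplify; lra).
        assert (0 <= INR M / (INR M + 1)) by (apply Rdiv_le_0_compat; lra).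
        assert (0 <= E / (E + 1)) by (apply Rdiv_le_0_compat; lra).
        assert (INR M / (INR M + 1) * (E / (E + 1)) < 1) by nra. nra. }
    destruct eps; simpl in *. lra.
Qed.

Lemma conv_ratio (q v : nat -> R) C E :
  (forall k, 0 <= q k <= 1) -> (forall j, Rabs (v j - C) <= E) -> is_lim_seq v C ->
  is_lim_seq (psum q) p_infty -> (forall n, 0 < psum q n) ->
  is_lim_seq (fun n => conv q v n / psum q n) C.
Proof.
  intros Hq HE Hv HQ HQp. apply is_lim_seq_spec. intros eps.
  assert (HE0 : 0 <= E) by (pose proof (HE 0%nat); pose proof (Rabs_pos (v 0%nat - C)); lra).
  destruct (lim_ev v C (eps/2) Hv ltac:(destruct eps; simpl; lra)) as [N1 HN1].
  destruct (lim_ev_inf (psum q) (2 * (INR N1 * E + 1) / eps) HQ) as [N2 HN2].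
  exists (N1 + N2)%nat. intros n Hn. specialize (HN2 n ltac:(lia)). pose proof (HQp n).
  assert (Eq : conv q v n / psum q n - C = conv q (fun j => v j - C) n / psum q n).
  { assert (E1 : conv q (fun j => v j - C) n = conv q v n - C * psum q n).
    { unfold conv, psum.
      rewrite (fs_ext (fun k => q k * (v (n - k)%nat - C)) (fun k => q k * v (n - k)%nat - C * q k)) by (intros; ring).
      rewrite fs_minus, fs_scal. ring. }
    rewrite E1. field. lra. }
  rewrite Eq. unfold Rdiv. rewrite Rabs_mult, Rabs_inv, (Rabs_pos_eq (psum q n)) by lra.
  assert (Hb : Rabs (conv q (fun j => v j - C) n) <= eps/2 * psum q n + INR N1 * E).
  { unfold conv. eapply Rle_trans; [apply fs_abs|].
    apply Rle_trans with (fs (fun k => eps/2 * q k + (if Nat.ltb (n - k) N1 then E else 0)) (S n)).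
    - apply fs_le. intros k Hk. pose proof (Hq k). rewrite Rabs_mult, (Rabs_pos_eq (q k)) by lra.
      pose proof (HE (n-k)%nat). pose proof (Rabs_pos (v (n - k)%nat - C)).
      destruct (Nat.ltb (n - k) N1) eqn:EM.
      + assert (q k * Rabs (v (n - k)%nat - C) <= 1 * E) by (apply Rmult_le_compat; lra).
        destruct eps; simpl in *. nra.
      + apply Nat.ltb_ge in EM. specialize (HN1 _ EM).
        assert (q k * Rabs (v (n - k)%nat - C) <= q k * (eps/2)) by (apply Rmult_le_compat_l; lra). lra.
    - rewrite fs_plus, fs_scal. fold (psum q n). rewrite fs_rev.
      rewrite (fs_ext (fun k => if Nat.ltb (n - (S n - 1 - k)) N1 then E else 0) (fun k => if Nat.ltb k N1 then E else 0)).
      2:{ intros k Hk. replace (n - (S n - 1 - k))%nat with k by lia. reflexivity. }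
      pose proof (count_ind_le N1 E (S n) HE0). lra. }
  destruct eps as [ep Hep]; simpl in *.
  assert (Hlt : INR N1 * E < ep / 2 * psum q n).
  { apply Rmult_lt_reg_l with (2 / ep). apply Rdiv_lt_0_compat; lra.
    replace (2 / ep * (ep / 2 * psum q n)) with (psum q n) by (field; lra).
    apply Rle_lt_trans with (2 * (INR N1 * E + 1) / ep); [|lra].
    unfold Rdiv. rewrite Rmult_comm, <- Rmult_assoc. apply Rmult_le_compat_r. left; apply Rinv_0_lt_compat; lra. lra. }
  apply Rle_lt_trans with ((ep/2 * psum q n + INR N1 * E) * / psum q n).
  - apply Rmult_le_compat_r; [left; apply Rinv_0_lt_compat; lra| auto].
  - apply Rmult_lt_reg_r with (psum q n); [lra|]. rewrite Rmult_assoc, Rinv_l by lra. lra.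
Qed.

Lemma pw_inf g : 0 < g -> is_lim_seq (fun n => Rpower (INR n + 1) g) p_infty.
Proof.
  intros Hg. apply is_lim_seq_spec. intros A.
  set (T := exp (ln (Rabs A + 1) / g)).
  destruct (lim_ev_inf INR T is_lim_seq_INR) as [N HN].
  exists N. intros n Hn. specialize (HN n Hn).
  assert (HT : 0 < T) by apply exp_pos.
  unfold Rpower. apply Rlt_le_trans with (Rabs A + 1); [pose proof (Rle_abs A); lra|].
  rewrite <- (exp_ln (Rabs A + 1)) at 1 by (pose proof (Rabs_pos A); lra).
  apply exp_mono. assert (ln T < ln (INR n + 1)) by (apply ln_increasing; lra).
  unfold T in H. rewrite ln_exp in H.
  apply Rmult_le_reg_l with (/ g). apply Rinv_0_lt_compat; lra.
  replace (/ g * (g * ln (INR n + 1))) with (ln (INR n + 1)) by (field; lra).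
  unfold Rdiv in H. rewrite Rmult_comm. lra.
Qed.

Lemma pw_zero g : 0 < g -> is_lim_seq (fun n => Rpower (INR n + 1) (- g)) 0.
Proof.
  intros Hg. apply (is_lim_seq_ext (fun n => / Rpower (INR n + 1) g)).
  - intros n. rewrite Rpower_neg. reflexivity.
  - apply (is_lim_seq_inv _ p_infty (pw_inf g Hg)). discriminate.
Qed.

Definition bt H := 2 - 2 * H.

Lemma bt_range H : 1/2 < H < 1 -> 0 < bt H < 1.
Proof. unfold bt; lra. Qed.

Lemma wp_bt H n : wp H n = Rpower (INR n) (- bt H).
Proof. unfold wp, bt. f_equal. ring. Qed.

Lemma qq_0 H c : qq H c 0 = 1.
Proof. unfold qq, psum. simpl. ring. Qed.

Lemma qq_S H c n : qq H c (S n) = qq H c n - pT H c (S n).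
Proof. unfold qq, psum. change (fs (pT H c) (S (S n))) with (fs (pT H c) (S n) + pT H c (S n)). ring. Qed.

Lemma uu_S H c n : uu H c (S n) = c * Rpower (INR n + 1) (- bt H).
Proof. simpl uu. rewrite wp_bt, S_INR. reflexivity. Qed.

Lemma uu_pos H c n : 0 < c -> 0 < uu H c n.
Proof. intros Hc. destruct n; [simpl; lra|]. rewrite uu_S. pose proof (Rpower_pos (INR n + 1) (- bt H)). nra. Qed.

Lemma uu_decr H c n : 1/2 < H < 1 -> 0 < c -> uu H c (S (S n)) <= uu H c (S n).
Proof.
  intros hH hc. rewrite !uu_S. apply Rmult_le_compat_l; [lra|]. rewrite !Rpower_neg.
  pose proof (bt_range H hH). pose proof (pos_INR n).
  apply Rinv_le_contravar; [apply Rpower_pos|]. apply Rpower_base_le; [lra| rewrite S_INR; lra| lra].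
Qed.

Lemma uu_lim H c : 1/2 < H < 1 -> is_lim_seq (uu H c) 0.
Proof.
  intros hH. apply is_lim_seq_incr_1. apply (is_lim_seq_ext (fun n => c * Rpower (INR n + 1) (- bt H))).
  - intros; rewrite uu_S; reflexivity.
  - replace (Finite 0) with (Rbar_mult c 0) by (simpl; f_equal; ring). apply is_lim_seq_scal_l.
    apply pw_zero. apply bt_range; auto.
Qed.

Lemma qq_decr H c n : 1/2 < H < 1 -> 0 < c < Rpower 2 (2 * H - 2) -> qq H c (S n) <= qq H c n.
Proof. intros. rewrite qq_S. pose proof (pT_nonneg H c H0 H1 (S n)). lra. Qed.

Lemma qq_mono H c k n : 1/2 < H < 1 -> 0 < c < Rpower 2 (2 * H - 2) -> (k <= n)%nat -> qq H c n <= qq H c k.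
Proof. intros h1 h2 Hkn. induction Hkn; [lra|]. pose proof (qq_decr H c m h1 h2). lra. Qed.

Lemma qq_le1 H c n : 1/2 < H < 1 -> 0 < c < Rpower 2 (2 * H - 2) -> qq H c n <= 1.
Proof. intros. rewrite <- (qq_0 H c). apply qq_mono; auto; lia. Qed.

Lemma fs_last_ind n K : fs (fun k => if Nat.leb n k then K else 0) (S n) = K.
Proof.
  cbn [fs]. rewrite (fs_ext _ (fun _ => 0)).
  - rewrite fs_zero. rewrite Nat.leb_refl. ring.
  - intros i Hi. replace (Nat.leb n i) with false; auto. symmetry; apply Nat.leb_gt; lia.
Qed.

Lemma qq_nonneg H c N : 1/2 < H < 1 -> 0 < c < Rpower 2 (2 * H - 2) -> 0 <= qq H c N.
Proof.
  intros h1 h2. destruct (Rle_lt_dec 0 (qq H c N)) as [Hle|Hlt]; auto. exfalso.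
  set (qN := qq H c N). assert (HqN : qN < 0) by exact Hlt. set (d := - qN / (INR N + 1)).
  assert (Hd : 0 < d) by (unfold d; apply Rdiv_lt_0_compat; [unfold qN; lra| apply INR_p1]).
  destruct (lim_ev (uu H c) 0 d (uu_lim H c h1) Hd) as [M0 HM0].
  set (n := (N + M0)%nat).
  pose proof (identity_I H c n) as I1. unfold conv in I1.
  assert (Hb : fs (fun k => qq H c k * uu H c (n - k)%nat) (S n) <=
               fs (fun k => (if Nat.ltb k N then d else 0) + (if Nat.leb n k then qN else 0)) (S n)).
  { apply fs_le. intros k Hk. pose proof (uu_pos H c (n-k)%nat ltac:(lra)).
    destruct (Nat.ltb k N) eqn:E1.
    - apply Nat.ltb_lt in E1. replace (Nat.leb n k) with false by (symmetry; apply Nat.leb_gt; unfold n; lia).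
      specialize (HM0 (n-k)%nat ltac:(unfold n; lia)). rewrite Rminus_0_r, Rabs_pos_eq in HM0 by lra.
      pose proof (qq_le1 H c k h1 h2).
      assert (qq H c k * uu H c (n - k)%nat <= 1 * uu H c (n - k)%nat) by (apply Rmult_le_compat_r; lra). lra.
    - apply Nat.ltb_ge in E1. pose proof (qq_mono H c N k h1 h2 E1) as Hqk. fold qN in Hqk.
      destruct (Nat.leb n k) eqn:E2.
      + apply Nat.leb_le in E2. replace k with n by lia. replace (n - n)%nat with 0%nat by lia. simpl uu.
        rewrite Rmult_1_r. replace n with k by lia. lra.
      + assert (qq H c k * uu H c (n - k)%nat <= 0 * uu H c (n - k)%nat) by (apply Rmult_le_compat_r; unfold qN in *; lra). lra. }
  rewrite fs_plus, count_ind, fs_last_ind in Hb.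
  replace (Nat.min (S n) N) with N in Hb by (unfold n; lia).
  assert (INR N * d + qN = qN / (INR N + 1)) by (unfold d; field; apply Rgt_not_eq, INR_p1).
  assert (qN / (INR N + 1) < 0) by (apply Rdiv_neg_pos; [lra| apply INR_p1]). lra.
Qed.

Lemma Rpower_inv_base x b : 0 < x -> Rpower (/ x) b = / Rpower x b.
Proof. intros. unfold Rpower. rewrite ln_Rinv by auto. rewrite <- exp_Ropp. f_equal. ring. Qed.

Lemma bern_low b t : 0 <= b <= 1 -> -1 < t -> 1 + b * t / (1 + t) <= Rpower (1 + t) b.
Proof.
  intros Hb Ht. set (s := - t / (1 + t)).
  assert (Es : 1 + s = / (1 + t)) by (unfold s; field; lra).
  assert (Hs : -1 < s). { assert (0 < / (1 + t)) by (apply Rinv_0_lt_compat; lra). lra. }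
  pose proof (bern b s Hb Hs) as Hb1. rewrite Es, Rpower_inv_base in Hb1 by lra.
  set (R := Rpower (1 + t) b) in *. assert (HR : 0 < R) by apply Rpower_pos.
  set (X := b * t / (1 + t)).
  assert (EX : b * s = - X) by (unfold X, s; field; lra).
  rewrite EX in Hb1. assert (HiR : 0 < / R) by (apply Rinv_0_lt_compat; lra).
  assert (H1X : 0 < 1 - X) by lra.
  assert (R >= / (1 - X)).
  { apply Rle_ge. replace R with (/ / R) by (field; lra). apply Rinv_le_contravar; lra. }
  assert (/ (1 - X) >= 1 + X).
  { apply Rle_ge. apply Rmult_le_reg_r with (1 - X); [lra|]. rewrite Rinv_l by lra. nra. }
  lra.
Qed.

Lemma Rpower_cont b x0 : 0 < x0 -> continuity_pt (fun x => Rpower x b) x0.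
Proof.
  intros Hx. apply derivable_continuous_pt. exists (b * / x0 * exp (b * ln x0)).
  apply is_derive_Reals. unfold Rpower. auto_derive; [lra| ring].
Qed.

Lemma psum_diff_up (q : nat -> R) n d : (forall k, q (S k) <= q k) ->
  psum q (n + d) - psum q n <= INR d * q n.
Proof.
  intros Hq. induction d.
  - rewrite Nat.add_0_r. simpl. lra.
  - replace (n + S d)%nat with (S (n + d)) by lia. unfold psum in *.
    change (fs q (S (S (n + d)))) with (fs q (S (n + d)) + q (S (n + d))).
    assert (q (S (n + d)) <= q n).
    { clear IHd. assert (forall j, q (n + j)%nat <= q n) as Hj.
      { induction j; [rewrite Nat.add_0_r; lra|]. replace (n + S j)%nat with (S (n + j)) by lia.
        pose proof (Hq (n + j)%nat). lra. }
      replace (S (n + d)) with (n + S d)%nat by lia. apply Hj. }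
    rewrite S_INR. lra.
Qed.

Lemma psum_diff_low (q : nat -> R) n d : (forall k, q (S k) <= q k) -> (d <= n)%nat ->
  INR d * q n <= psum q n - psum q (n - d).
Proof.
  intros Hq. revert n. induction d; intros n Hdn.
  - replace (n - 0)%nat with n by lia. simpl. lra.
  - destruct n as [|n]; [lia|]. replace (S n - S d)%nat with (n - d)%nat by lia.
    specialize (IHd n ltac:(lia)). unfold psum in *.
    change (fs q (S (S n))) with (fs q (S n) + q (S n)). pose proof (Hq n). rewrite S_INR.
    assert (0 <= INR d) by apply pos_INR.
    assert (INR d * q (S n) <= INR d * q n) by (apply Rmult_le_compat_l; lra). lra.
Qed.

Lemma lim_inv_INR : is_lim_seq (fun n => / INR n) 0.
Proof.
  replace (Finite 0) with (Rbar_inv p_infty) by reflexivity.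
  apply is_lim_seq_inv; [apply is_lim_seq_INR| discriminate].
Qed.

Lemma Rpower_1m x b : 0 < x -> Rpower x (1 - b) = x / Rpower x b.
Proof.
  intros Hx. unfold Rminus. rewrite Rpower_plus, Rpower_1, Rpower_neg by auto. reflexivity.
Qed.

Lemma md_lower (q : nat -> R) b n d : (forall k, q (S k) <= q k) -> (1 <= d)%nat -> (1 <= n)%nat ->
  (psum q (n + d) / Rpower (INR (n + d)) b * Rpower (1 + INR d / INR n) b - psum q n / Rpower (INR n) b)
    * (INR n / INR d) <= q n * Rpower (INR n) (1 - b).
Proof.
  intros Hq Hd Hn. pose proof (psum_diff_up q n d Hq) as Hup.
  assert (Hn0 : 0 < INR n) by (apply lt_0_INR; lia). assert (Hd0 : 0 < INR d) by (apply lt_0_INR; lia).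
  rewrite (Rpower_split (INR n) (INR (n + d))) by (try rewrite plus_INR; lra).
  replace (INR (n + d) / INR n) with (1 + INR d / INR n) by (rewrite plus_INR; field; lra).
  rewrite Rpower_1m by auto.
  pose proof (Rpower_pos (INR n) b). pose proof (Rpower_pos (1 + INR d / INR n) b).
  replace ((psum q (n + d) / (Rpower (INR n) b * Rpower (1 + INR d / INR n) b) * Rpower (1 + INR d / INR n) b -
     psum q n / Rpower (INR n) b) * (INR n / INR d)) with ((psum q (n + d) - psum q n) / INR d * (INR n / Rpower (INR n) b))
     by (field; lra).
  apply Rmult_le_compat_r.
  - apply Rdiv_le_0_compat; lra.
  - apply Rmult_le_reg_r with (INR d); [lra|]. unfold Rdiv. rewrite Rmult_assoc, Rinv_l by lra. lra.
Qed.

Lemma md_upper (q : nat -> R) b n d : (forall k, q (S k) <= q k) -> (1 <= d)%nat -> (d < n)%nat ->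
  q n * Rpower (INR n) (1 - b) <=
  (psum q n / Rpower (INR n) b - psum q (n - d) / Rpower (INR (n - d)) b * Rpower (1 - INR d / INR n) b)
    * (INR n / INR d).
Proof.
  intros Hq Hd Hn. pose proof (psum_diff_low q n d Hq ltac:(lia)) as Hlow.
  assert (Hn0 : 0 < INR n) by (apply lt_0_INR; lia). assert (Hd0 : 0 < INR d) by (apply lt_0_INR; lia).
  assert (Hnd : 0 < INR (n - d)) by (apply lt_0_INR; lia).
  rewrite (Rpower_split (INR n) (INR (n - d))) by lra.
  replace (INR (n - d) / INR n) with (1 - INR d / INR n) by (rewrite minus_INR by lia; field; lra).
  rewrite Rpower_1m by auto.
  pose proof (Rpower_pos (INR n) b). pose proof (Rpower_pos (1 - INR d / INR n) b).
  replace ((psum q n / Rpower (INR n) b - psum q (n - d) / (Rpower (INR n) b * Rpower (1 - INR d / INR n) b) *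
     Rpower (1 - INR d / INR n) b) * (INR n / INR d)) with ((psum q n - psum q (n - d)) / INR d * (INR n / Rpower (INR n) b))
     by (field; lra).
  apply Rmult_le_compat_r.
  - apply Rdiv_le_0_compat; lra.
  - apply Rmult_le_reg_r with (INR d); [lra|]. unfold Rdiv. rewrite Rmult_assoc, Rinv_l by lra. lra.
Qed.

Lemma div_facts m n : (2 <= m)%nat -> (m <= n)%nat ->
  (1 <= n / m)%nat /\ (m * (n / m) <= n)%nat /\ (n < m * (n / m) + m)%nat /\ (2 * (n / m) <= n)%nat.
Proof.
  intros Hm Hn. pose proof (Nat.div_mod n m ltac:(lia)) as E. pose proof (Nat.mod_upper_bound n m ltac:(lia)).
  set (d := (n / m)%nat) in *. set (r := (n mod m)%nat) in *.
  assert (1 <= d)%nat by (destruct d; nia). nia.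
Qed.

Lemma dn_lim m : (2 <= m)%nat -> is_lim_seq (fun n => INR (n / m) / INR n) (/ INR m).
Proof.
  intros Hm. assert (Hm0 : 0 < INR m) by (apply lt_0_INR; lia).
  apply (is_lim_seq_le_le_loc (fun n => / INR m - / INR n) _ (fun _ => / INR m)).
  - exists m. intros n Hn. destruct (div_facts m n Hm Hn) as [H1 [H2 [H3 H4]]].
    assert (Hn0 : 0 < INR n) by (apply lt_0_INR; lia).
    apply le_INR in H2. apply lt_INR in H3. rewrite mult_INR in H2. rewrite plus_INR, mult_INR in H3.
    split.
    + apply Rmult_le_reg_r with (INR m * INR n); [nra|]. field_simplify; [|lra|lra]. nra.
    + apply Rmult_le_reg_r with (INR m * INR n); [nra|]. field_simplify; [|lra|lra]. nra.
  - pose proof (is_lim_seq_minus' _ _ _ _ (is_lim_seq_const (/ INR m)) lim_inv_INR) as Hx.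
    rewrite Rminus_0_r in Hx. exact Hx.
  - apply is_lim_seq_const.
Qed.

Lemma mono_density (q : nat -> R) (b M : R) : 0 < b < 1 -> 0 <= M -> (forall n, 0 <= q n) ->
  (forall n, q (S n) <= q n) ->
  is_lim_seq (fun n => psum q n / Rpower (INR n) b) M ->
  is_lim_seq (fun n => q n * Rpower (INR n) (1 - b)) (b * M).
Proof.
  intros Hb HM Hq0 Hq Hg. set (g := fun n => psum q n / Rpower (INR n) b) in *.
  apply is_lim_seq_spec. intros [eps Heps]. simpl.
  destruct (lim_ev_inf INR (2 * b * M / eps + 2) is_lim_seq_INR) as [N0 HN0].
  specialize (HN0 N0 (Nat.le_refl _)).
  set (m := (N0 + 2)%nat). assert (Hm : (2 <= m)%nat) by (unfold m; lia).
  assert (Hmr : INR m = INR N0 + 2) by (unfold m; rewrite plus_INR; simpl; ring).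
  assert (HbMe : 0 <= 2 * b * M / eps) by (apply Rdiv_le_0_compat; nra).
  assert (Hsmall : b * M / (INR m - 1) < eps / 2).
  { apply Rmult_lt_reg_r with (2 * (INR m - 1) / eps). apply Rdiv_lt_0_compat; lra.
    replace (b * M / (INR m - 1) * (2 * (INR m - 1) / eps)) with (2 * b * M / eps) by (field; lra).
    replace (eps / 2 * (2 * (INR m - 1) / eps)) with (INR m - 1) by (field; lra). lra. }
  set (Lm := (M * Rpower (1 + / INR m) b - M) * INR m).
  set (Um := (M - M * Rpower (1 - / INR m) b) * INR m).
  assert (Hm0 : 2 <= INR m) by lra.
  assert (Hinvm : 0 < / INR m <= / 2).
  { split; [apply Rinv_0_lt_compat; lra| apply Rinv_le_contravar; lra]. }
  assert (HLm : b * M - eps / 2 < Lm).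
  { pose proof (bern_low b (/ INR m) ltac:(lra) ltac:(pose proof (Rinv_0_lt_compat (INR m) ltac:(lra)); lra)) as Hl.
    replace (b * / INR m / (1 + / INR m)) with (b / (INR m + 1)) in Hl by (field; lra).
    assert (Lm >= M * (b / (INR m + 1)) * INR m).
    { unfold Lm. apply Rle_ge. apply Rmult_le_compat_r; [lra|]. nra. }
    assert (b * M / (INR m + 1) <= b * M / (INR m - 1)).
    { apply Rmult_le_compat_l; [nra|]. apply Rinv_le_contravar; lra. }
    replace (M * (b / (INR m + 1)) * INR m) with (b * M - b * M / (INR m + 1)) in H by (field; lra). lra. }
  assert (HUm : Um < b * M + eps / 2).
  { pose proof (bern_low b (- / INR m) ltac:(lra) ltac:(lra)) as Hl.
    replace (b * - / INR m / (1 + - / INR m)) with (- (b / (INR m - 1))) in Hl by (field; lra).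
    replace (1 + - / INR m) with (1 - / INR m) in Hl by ring.
    assert (Um <= M * (b / (INR m - 1)) * INR m).
    { unfold Um. apply Rmult_le_compat_r; [lra|]. nra. }
    replace (M * (b / (INR m - 1)) * INR m) with (b * M + b * M / (INR m - 1)) in H by (field; lra). lra. }
  set (d := fun n => (n / m)%nat).
  assert (Hdl : is_lim_seq (fun n => INR (d n) / INR n) (/ INR m)) by (apply dn_lim; auto).
  assert (Hnd : is_lim_seq (fun n => INR n / INR (d n)) (INR m)).
  { apply (is_lim_seq_ext_loc (fun n => / (INR (d n) / INR n))).
    - exists m. intros n Hn. destruct (div_facts m n Hm Hn) as [H1 _].
      assert (0 < INR n) by (apply lt_0_INR; lia). assert (0 < INR (d n)) by (apply lt_0_INR; unfold d; lia).
      field. lra.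
    - pose proof (is_lim_seq_inv _ _ Hdl) as Hx. simpl in Hx. rewrite Rinv_inv in Hx. apply Hx.
      intro Hc. injection Hc. apply Rinv_neq_0_compat. lra. }
  assert (Hlow : is_lim_seq (fun n => (g (n + d n)%nat * Rpower (1 + INR (d n) / INR n) b - g n) * (INR n / INR (d n))) Lm).
  { apply is_lim_seq_mult'; [|exact Hnd]. apply is_lim_seq_minus'; [|exact Hg].
    apply is_lim_seq_mult'.
    - apply (is_lim_seq_subseq g M (fun n => (n + d n)%nat)); [|exact Hg].
      intros P [N HN]. exists N. intros n Hn. apply HN. lia.
    - apply (is_lim_seq_continuous (fun x => Rpower x b)). apply Rpower_cont.
      pose proof (Rinv_0_lt_compat (INR m) ltac:(lra)); lra.
      apply is_lim_seq_plus'; [apply is_lim_seq_const| exact Hdl]. }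
  assert (Hupp : is_lim_seq (fun n => (g n - g (n - d n)%nat * Rpower (1 - INR (d n) / INR n) b) * (INR n / INR (d n))) Um).
  { apply is_lim_seq_mult'; [|exact Hnd]. apply is_lim_seq_minus'; [exact Hg|].
    apply is_lim_seq_mult'.
    - apply (is_lim_seq_subseq g M (fun n => (n - d n)%nat)); [|exact Hg].
      intros P [N HN]. exists (2 * N + m)%nat. intros n Hn. apply HN.
      destruct (div_facts m n Hm ltac:(lia)) as [_ [_ [_ H4]]]. unfold d. lia.
    - apply (is_lim_seq_continuous (fun x => Rpower x b)). apply Rpower_cont.
      pose proof (Rinv_le_contravar 2 (INR m) ltac:(lra) ltac:(lra)). lra.
      apply is_lim_seq_minus'; [apply is_lim_seq_const| exact Hdl]. }
  destruct (lim_ev _ _ (eps/2) Hlow ltac:(lra)) as [N1 HN1].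
  destruct (lim_ev _ _ (eps/2) Hupp ltac:(lra)) as [N2 HN2].
  exists (N1 + N2 + m)%nat. intros n Hn.
  specialize (HN1 n ltac:(lia)). specialize (HN2 n ltac:(lia)).
  destruct (div_facts m n Hm ltac:(lia)) as [H1 [H2 [H3 H4]]].
  pose proof (md_lower q b n (d n) Hq H1 ltac:(lia)) as L1.
  pose proof (md_upper q b n (d n) Hq H1 ltac:(unfold d; lia)) as U1.
  unfold g in HN1, HN2. apply Rabs_def2 in HN1. apply Rabs_def2 in HN2.
  apply Rabs_def1; unfold d in *; lra.
Qed.

Lemma sP_ge x n : 0 < x < 1 -> x <= sP x n.
Proof.
  intros Hx. induction n; [rewrite sP_0; lra|]. pose proof (sP_mono x n Hx). lra.
Qed.

Lemma P_lim0 x : 0 < x < 1 -> is_lim_seq (P x) 0.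
Proof.
  intros Hx. apply (is_lim_seq_le_le (fun _ => 0) _ (fun n => Rpower (INR n + 1) (- (1 - x)))).
  - intros n. split; [left; apply P_pos; lra|]. replace (- (1 - x)) with (x - 1) by ring. apply P_upper; auto.
  - apply is_lim_seq_const.
  - apply pw_zero. lra.
Qed.

Lemma ratio_S H c n : 1/2 < H < 1 ->
  uu H c (S n) / P (1 - bt H) (S n) = c / sP (1 - bt H) n.
Proof.
  intros hH. pose proof (bt_range H hH). rewrite uu_S. unfold sP.
  replace (1 - (1 - bt H)) with (bt H) by ring. rewrite S_INR, Rpower_neg.
  pose proof (P_pos (1 - bt H) (S n) ltac:(lra)). pose proof (Rpower_pos (INR n + 1) (bt H)).
  field. lra.
Qed.

Lemma psum_b_ratio b n : 0 < b < 1 ->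
  psum (P b) (S n) / Rpower (INR (S n)) b = sP b n * (1 + b * / INR (S n)) / b.
Proof.
  intros Hb. rewrite P_psum by lra. unfold sP.
  assert (HS : 0 < INR (S n)) by (rewrite S_INR; pose proof (pos_INR n); lra).
  rewrite Rpower_1m by auto. pose proof (Rpower_pos (INR (S n)) b).
  field. lra.
Qed.

Lemma main_asym H c : 1/2 < H < 1 -> 0 < c < Rpower 2 (2 * H - 2) ->
  exists K, 0 < K /\ is_lim_seq (fun n => qq H c n * Rpower (INR n) (1 - bt H)) K /\ is_lim_seq (psum (qq H c)) p_infty.
Proof.
  intros hH hc. pose proof (bt_range H hH) as hb. set (be := bt H) in *.
  destruct (sP_lim (1 - be) ltac:(lra)) as [La [HLa [HLal _]]].
  destruct (sP_lim be hb) as [Lb [HLb [HLbl _]]].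
  set (C := c / La). assert (HC : 0 < C) by (unfold C; apply Rdiv_lt_0_compat; lra).
  set (a := P (1 - be)). set (b := P be).
  set (e := fun i => uu H c i / a i - C).
  set (E := 1 + c / (1 - be) + C).
  assert (He : is_lim_seq e 0).
  { apply is_lim_seq_incr_1. apply (is_lim_seq_ext (fun n => c * / sP (1 - be) n - C)).
    - intros n. unfold e, a. rewrite ratio_S by auto. fold be. reflexivity.
    - replace (Finite 0) with (Finite (c * / La - C)) by (unfold C; f_equal; field; lra).
      apply is_lim_seq_minus'; [|apply is_lim_seq_const]. apply is_lim_seq_mult'; [apply is_lim_seq_const|].
      pose proof (is_lim_seq_inv _ _ HLal ltac:(intro Hx; injection Hx; lra)) as Hx. simpl in Hx. exact Hx. }
  assert (HeB : forall i, Rabs (e i) <= E).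
  { intros [|n].
    - unfold e, a. simpl. rewrite Rdiv_1_r. unfold E. pose proof (Rdiv_lt_0_compat c (1 - be) ltac:(lra) ltac:(lra)).
      apply Rabs_le. lra.
    - unfold e, a. rewrite ratio_S by auto. fold be. pose proof (sP_ge (1 - be) n ltac:(lra)).
      assert (0 < c / sP (1 - be) n <= c / (1 - be)).
      { split. apply Rdiv_lt_0_compat; lra. apply Rmult_le_compat_l; [lra| apply Rinv_le_contravar; lra]. }
      unfold E. apply Rabs_le. lra. }
  assert (Hab : forall i, 0 <= a i <= 1).
  { intros i. unfold a. split; [left; apply P_pos; lra| apply P_le1; lra]. }
  assert (Hconv : forall j, conv b a j = 1) by (intros j; unfold a, b; apply P_conv; ring).
  set (v := conv b (uu H c)).
  assert (Hv : forall j, v j - C = conv b (fun i => a i * e i) j).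
  { intros j. unfold v. rewrite <- (Rmult_1_r C) at 1. rewrite <- (Hconv j). unfold conv, e. rewrite <- fs_scal, <- fs_minus.
    apply fs_ext. intros k Hk. pose proof (P_pos (1 - be) (j - k) ltac:(lra)). fold a in H0. field. lra. }
  assert (Hvl : is_lim_seq v C).
  { apply (is_lim_seq_ext (fun j => conv b (fun i => a i * e i) j + C)).
    - intros j. rewrite <- Hv. ring.
    - replace (Finite C) with (Finite (0 + C)) by (f_equal; ring). apply is_lim_seq_plus'; [|apply is_lim_seq_const].
      apply (conv_to0 b a e E); auto.
      + intros i. unfold b. left; apply P_pos; lra.
      + apply P_lim0. auto. }
  assert (HvB : forall j, Rabs (v j - C) <= E).
  { intros j. rewrite Hv. unfold conv. eapply Rle_trans; [apply fs_abs|].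
    apply Rle_trans with (fs (fun k => E * (b k * a (j - k)%nat)) (S j)).
    - apply fs_le. intros k Hk. rewrite !Rabs_mult.
      rewrite (Rabs_pos_eq (b k)) by (unfold b; left; apply P_pos; lra).
      rewrite (Rabs_pos_eq (a (j-k)%nat)) by apply Hab.
      pose proof (HeB (j-k)%nat). pose proof (Hab (j-k)%nat). assert (0 <= b k) by (unfold b; left; apply P_pos; lra).
      assert (0 <= b k * a (j - k)%nat) by nra.
      replace (b k * (a (j-k)%nat * Rabs (e (j-k)%nat))) with ((b k * a (j-k)%nat) * Rabs (e (j-k)%nat)) by ring.
      rewrite (Rmult_comm E). apply Rmult_le_compat_l; lra.
    - rewrite fs_scal. fold (conv b a j). rewrite Hconv. lra. }
  assert (Hq : forall k, 0 <= qq H c k <= 1) by (intros; split; [apply qq_nonneg| apply qq_le1]; auto).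
  assert (HQp : forall n, 1 <= psum (qq H c) n).
  { intros n. induction n; [unfold psum; simpl; rewrite qq_0; lra|].
    unfold psum in *. change (fs (qq H c) (S (S n))) with (fs (qq H c) (S n) + qq H c (S n)). pose proof (Hq (S n)). lra. }
  assert (HII : forall n, conv (qq H c) v n = psum b n) by (intros; apply identity_II).
  assert (HBl : is_lim_seq (fun n => psum b n / Rpower (INR n) be) (Lb / be)).
  { apply is_lim_seq_incr_1. apply (is_lim_seq_ext (fun n => sP be n * (1 + be * / INR (S n)) / be)).
    - intros n. unfold b. rewrite psum_b_ratio by auto. reflexivity.
    - replace (Lb / be) with (Lb * (1 + be * 0) / be) by (field; lra).
      apply is_lim_seq_div'; [|apply is_lim_seq_const| lra]. apply is_lim_seq_mult'; [exact HLbl|].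
      apply is_lim_seq_plus'; [apply is_lim_seq_const|]. apply is_lim_seq_mult'; [apply is_lim_seq_const|].
      apply (is_lim_seq_incr_1 (fun n => / INR n) 0). apply lim_inv_INR. }
  assert (HBinf : is_lim_seq (psum b) p_infty).
  { apply is_lim_seq_incr_1.
    apply (is_lim_seq_ext (fun n => Rpower (INR n + 1) be * (psum b (S n) / Rpower (INR (S n)) be))).
    - intros n. rewrite S_INR. pose proof (Rpower_pos (INR n + 1) be). field. lra.
    - apply (is_lim_seq_mult _ _ p_infty (Lb / be)).
      + apply pw_inf. lra.
      + apply (is_lim_seq_incr_1 (fun n => psum b n / Rpower (INR n) be)). exact HBl.
      + apply is_Rbar_mult_p_infty_pos. simpl. apply Rdiv_lt_0_compat; lra. }
  assert (HQinf : is_lim_seq (psum (qq H c)) p_infty).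
  { apply (is_lim_seq_le_p_loc (fun n => psum b n * / (C + E))).
    - exists 0%nat. intros n _. rewrite <- HII. unfold conv, psum.
      apply Rmult_le_reg_r with (C + E). assert (0 <= E) by (pose proof (HeB 0%nat); pose proof (Rabs_pos (e 0%nat)); lra). lra.
      rewrite Rmult_assoc, Rinv_l by (assert (0 <= E) by (pose proof (HeB 0%nat); pose proof (Rabs_pos (e 0%nat)); lra); lra).
      rewrite Rmult_1_r, Rmult_comm, <- fs_scal. apply fs_le. intros k Hk.
      pose proof (HvB (n - k)%nat) as Hb1. apply Rabs_le_between' in Hb1. pose proof (Hq k).
      assert (qq H c k * v (n - k)%nat <= qq H c k * (C + E)) by (apply Rmult_le_compat_l; lra). lra.
    - apply (is_lim_seq_mult _ _ p_infty (/ (C + E))); [exact HBinf| apply is_lim_seq_const|].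
      apply is_Rbar_mult_p_infty_pos. simpl. apply Rinv_0_lt_compat.
      assert (0 <= E) by (pose proof (HeB 0%nat); pose proof (Rabs_pos (e 0%nat)); lra). lra. }
  assert (Hrat : is_lim_seq (fun n => conv (qq H c) v n / psum (qq H c) n) C).
  { apply (conv_ratio (qq H c) v C E); auto. intros n; pose proof (HQp n); lra. }
  assert (HQl : is_lim_seq (fun n => psum (qq H c) n / Rpower (INR n) be) (Lb / be / C)).
  { apply (is_lim_seq_ext (fun n => (psum b n / Rpower (INR n) be) / (conv (qq H c) v n / psum (qq H c) n))).
    - intros n. rewrite HII. pose proof (HQp n). pose proof (Rpower_pos (INR n) be).
      assert (0 < psum b n). { unfold b. rewrite P_psum by lra. pose proof (P_pos be n ltac:(lra)). pose proof (pos_INR n).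
        apply Rdiv_lt_0_compat; [nra| lra]. }
      field. lra.
    - apply is_lim_seq_div'; auto. lra. }
  exists (be * (Lb / be / C)). split; [|split; [|exact HQinf]].
  - apply Rmult_lt_0_compat; [lra|]. apply Rdiv_lt_0_compat; [apply Rdiv_lt_0_compat|]; lra.
  - apply mono_density; auto.
    + left. apply Rdiv_lt_0_compat; [apply Rdiv_lt_0_compat|]; lra.
    + intros; apply Hq.
    + intros; apply qq_decr; auto.
Qed.

Lemma sum_n_fs a n : sum_n a n = fs a (S n).
Proof. induction n. - rewrite sum_O. simpl. symmetry. apply Rplus_0_l. - rewrite sum_Sn, IHn. reflexivity. Qed.

Lemma qq_lim0 H c : 1/2 < H < 1 -> 0 < c < Rpower 2 (2 * H - 2) -> is_lim_seq (qq H c) 0.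
Proof.
  intros hH hc. destruct (main_asym H c hH hc) as [K [HK [Hl _]]].
  pose proof (bt_range H hH) as hb.
  apply is_lim_seq_incr_1.
  apply (is_lim_seq_ext (fun n => (qq H c (S n) * Rpower (INR (S n)) (1 - bt H)) * Rpower (INR n + 1) (- (1 - bt H)))).
  - intros n. rewrite Rpower_neg, S_INR. pose proof (Rpower_pos (INR n + 1) (1 - bt H)). field. lra.
  - replace (Finite 0) with (Finite (K * 0)) by (f_equal; ring). apply is_lim_seq_mult'.
    + apply (is_lim_seq_incr_1 (fun n => qq H c n * Rpower (INR n) (1 - bt H))). exact Hl.
    + apply pw_zero. lra.
Qed.

Lemma ET_ident H c n : fs (fun k => INR k * pT H c k) (S n) = fs (qq H c) n - INR n * qq H c n.
Proof.
  induction n.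
  - simpl. ring.
  - change (fs (fun k => INR k * pT H c k) (S (S n))) with (fs (fun k => INR k * pT H c k) (S n) + INR (S n) * pT H c (S n)).
    rewrite IHn. change (fs (qq H c) (S n)) with (fs (qq H c) n + qq H c n). rewrite qq_S, S_INR. ring.
Qed.

Lemma ET_bound H c m n : 1/2 < H < 1 -> 0 < c < Rpower 2 (2 * H - 2) -> (m <= n)%nat ->
  fs (qq H c) m - INR m * qq H c n <= fs (qq H c) n - INR n * qq H c n.
Proof.
  intros hH hc Hmn. induction Hmn; [lra|].
  change (fs (qq H c) (S m0)) with (fs (qq H c) m0 + qq H c m0). rewrite S_INR.
  pose proof (qq_decr H c m0 hH hc). pose proof (qq_nonneg H c (S m0) hH hc).
  apply le_INR in Hmn.
  assert ((INR m0 + 1 - INR m) * qq H c (S m0) <= (INR m0 + 1 - INR m) * qq H c m0) by (apply Rmult_le_compat_l; lra).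
  nra.
Qed.

Lemma ET_inf H c : 1/2 < H < 1 -> 0 < c < Rpower 2 (2 * H - 2) -> is_lim_seq (ET_partial H c) p_infty.
Proof.
  intros hH hc. destruct (main_asym H c hH hc) as [K [HK [_ HQ]]].
  apply is_lim_seq_spec. intros A.
  destruct (lim_ev_inf _ (A + 1) HQ) as [m' Hm']. specialize (Hm' m' (Nat.le_refl _)).
  set (m := S m'). assert (Hmp : 0 < INR m + 1) by apply INR_p1.
  destruct (lim_ev _ 0 (/ (INR m + 1)) (qq_lim0 H c hH hc) ltac:(apply Rinv_0_lt_compat; lra)) as [N HN].
  exists (N + m)%nat. intros n Hn. unfold ET_partial. rewrite sum_n_fs, ET_ident.
  pose proof (ET_bound H c m n hH hc ltac:(unfold m in *; lia)).
  specialize (HN n ltac:(lia)). rewrite Rminus_0_r, Rabs_pos_eq in HN by (apply qq_nonneg; auto).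
  assert (INR m * qq H c n < 1).
  { apply Rle_lt_trans with ((INR m + 1) * qq H c n). pose proof (qq_nonneg H c n hH hc). nra.
    apply Rmult_lt_reg_l with (/ (INR m + 1)). apply Rinv_0_lt_compat; lra.
    rewrite <- Rmult_assoc, Rinv_l by lra. lra. }
  unfold psum in Hm'. fold m in Hm'. lra.
Qed.

Lemma tail_partial H c t N : INR N <= t < INR N + 1 ->
  forall j, fs (fun k => if Rlt_dec t (INR k) then pT H c k else 0) (S (N + j)) = fs (pT H c) (S (N + j)) - fs (pT H c) (S N).
Proof.
  intros Ht j. induction j.
  - rewrite Nat.add_0_r. rewrite (fs_ext _ (fun _ => 0)).
    + rewrite fs_zero. ring.
    + intros k Hk. destruct (Rlt_dec t (INR k)) as [Hl|]; auto. exfalso. assert (INR k <= INR N) by (apply le_INR; lia). lra.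
  - replace (N + S j)%nat with (S (N + j)) by lia. cbn [fs]. cbn [fs] in IHj. rewrite IHj.
    destruct (Rlt_dec t (INR (S (N + j)))) as [Hl|Hl].
    + ring.
    + exfalso. apply Hl. rewrite S_INR, plus_INR. pose proof (pos_INR j). lra.
Qed.

Lemma tail_eq H c t N : 1/2 < H < 1 -> 0 < c < Rpower 2 (2 * H - 2) -> INR N <= t < INR N + 1 ->
  tailT H c t = qq H c N.
Proof.
  intros hH hc Ht. unfold tailT. apply is_series_unique.
  assert (Hl : is_lim_seq (sum_n (fun k => if Rlt_dec t (INR k) then pT H c k else 0)) (qq H c N)).
  { apply (is_lim_seq_ext_loc (fun n => qq H c N - qq H c n)).
    - exists N. intros n Hn. rewrite sum_n_fs. replace n with (N + (n - N))%nat by lia.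
      rewrite tail_partial by auto. unfold qq, psum. ring.
    - pose proof (is_lim_seq_minus' _ _ _ _ (is_lim_seq_const (qq H c N)) (qq_lim0 H c hH hc)) as Hx.
      rewrite Rminus_0_r in Hx. exact Hx. }
  exact Hl.
Qed.

Definition L2f H c t := tailT H c t / Rpower t (1 - 2 * H).

Lemma L2_lim H c : 1/2 < H < 1 -> 0 < c < Rpower 2 (2 * H - 2) ->
  exists K, 0 < K /\ is_lim (L2f H c) p_infty K.
Proof.
  intros hH hc. destruct (main_asym H c hH hc) as [K [HK [Hs _]]].
  pose proof (bt_range H hH) as hb. set (g := 1 - bt H) in *.
  assert (Hg : 0 < g < 1) by (unfold g; lra).
  assert (Hr : is_lim_seq (fun n => Rpower (1 + / INR n) g) 1).
  { pose proof (is_lim_seq_continuous (fun x => Rpower x g) _ (1 + 0) ltac:(apply Rpower_cont; lra)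
      (is_lim_seq_plus' _ _ _ _ (is_lim_seq_const 1) lim_inv_INR)) as Hx.
    rewrite Rplus_0_r, Rpower_1_base in Hx. exact Hx. }
  assert (Hsr : is_lim_seq (fun n => qq H c n * Rpower (INR n) g * Rpower (1 + / INR n) g) K).
  { pose proof (is_lim_seq_mult' _ _ _ _ Hs Hr) as Hx. rewrite Rmult_1_r in Hx. exact Hx. }
  exists K. split; auto. apply is_lim_spec. intros eps. simpl.
  destruct (lim_ev _ _ eps Hs (cond_pos eps)) as [N1 HN1].
  destruct (lim_ev _ _ eps Hsr (cond_pos eps)) as [N2 HN2].
  exists (INR (N1 + N2) + 1). intros x Hx.
  assert (Hx0 : 0 <= x) by (pose proof (pos_INR (N1 + N2)); lra).
  destruct (nfloor_ex x Hx0) as [N HN].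
  assert (HNN : (N1 + N2 < N)%nat) by (apply INR_lt; lra).
  assert (HN0 : 0 < INR N) by (apply lt_0_INR; lia).
  unfold L2f. rewrite (tail_eq H c x N hH hc HN).
  replace (1 - 2 * H) with (- g) by (unfold g, bt; ring). rewrite Rpower_neg.
  replace (qq H c N / / Rpower x g) with (qq H c N * Rpower x g) by (pose proof (Rpower_pos x g); field; lra).
  specialize (HN1 N ltac:(lia)). specialize (HN2 N ltac:(lia)).
  apply Rabs_def2 in HN1. apply Rabs_def2 in HN2.
  pose proof (qq_nonneg H c N hH hc).
  assert (Rpower (INR N) g <= Rpower x g) by (apply Rpower_base_le; lra).
  assert (Rpower x g <= Rpower (INR N) g * Rpower (1 + / INR N) g).
  { replace (1 + / INR N) with ((INR N + 1) / INR N) by (field; lra).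
    rewrite <- (Rpower_split (INR N) (INR N + 1)) by lra.
    apply Rpower_base_le; lra. }
  assert (B1 : qq H c N * Rpower (INR N) g <= qq H c N * Rpower x g) by (apply Rmult_le_compat_l; lra).
  assert (B2 : qq H c N * Rpower x g <= qq H c N * (Rpower (INR N) g * Rpower (1 + / INR N) g)) by (apply Rmult_le_compat_l; lra).
  rewrite <- Rmult_assoc in B2.
  apply Rabs_def1; lra.
Qed.

Theorem theorem3p7 (H c : R) (hH : 1/2 < H < 1) (hc : 0 < c < Rpower 2 (2 * H - 2)) :
  is_lim_seq (ET_partial H c) p_infty /\
  exists L2 : R -> R, slowly_varying L2 /\
    forall t, 0 < t -> tailT H c t = Rpower t (1 - 2 * H) * L2 t.
Proof.
  split; [apply ET_inf; auto|].
  exists (L2f H c). destruct (L2_lim H c hH hc) as [K [HK HL]]. split; [split|].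
  - apply is_lim_spec in HL. destruct (HL (mkposreal (K/2) ltac:(lra))) as [M HM].
    exists M. intros x Hx. specialize (HM x Hx). simpl in HM. apply Rabs_def2 in HM. lra.
  - intros lam Hlam.
    assert (Hc : is_lim (fun x => L2f H c (lam * x)) p_infty K).
    { apply (is_lim_comp (L2f H c) (fun x => lam * x) p_infty K p_infty); auto.
      - apply is_lim_spec. intros M. exists (M / lam). intros x Hx.
        apply Rmult_lt_reg_l with (/ lam). apply Rinv_0_lt_compat; lra.
        replace (/ lam * (lam * x)) with x by (field; lra). unfold Rdiv in Hx. lra.
      - exists 0. intros x _. discriminate. }
    pose proof (is_lim_div _ _ p_infty K K Hc HL ltac:(intro Hx; injection Hx; lra) ltac:(simpl; auto)) as Hd.
    replace (Rbar_div K K) with (Finite 1) in Hd by (simpl; f_equal; field; lra). exact Hd.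
  - intros t Ht. unfold L2f. pose proof (Rpower_pos t (1 - 2 * H)). field. lra.
Qed.
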